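(* Let $\gamma:S^1\to\mathbb{R}^{2d}$ be a closed symplectically convex curve, parametrized so that $\omega(\gamma'(t),\gamma''(t))=1$ for all $t$. Let $X=\{(v,t)\in\mathbb{R}^{2d}\times S^1:\omega(v,\gamma'(t))=0\}$, $\Psi:X\to\mathbb{R}^{2d}$, $\Psi(v,t)=\gamma(t)+v$, and let $\Sigma$ (the wall) be the set of singular values of $\Psi$. Then $$\Sigma=\{P\in\mathbb{R}^{2d}:\exists t\in S^1\ \text{with}\ \omega(P,\gamma'(t))=\omega(\gamma(t),\gamma'(t))\ \text{and}\ \omega(P,\gamma''(t))=\omega(\gamma(t),\gamma''(t))\}.$$ Moreover, the set $\Sigma^{\mathrm{sing}}$ of singular points of $\Sigma$ consists of those $P\in\mathbb{R}^{2d}$ for which there exists $t\in S^1$ with $\omega(P,\gamma'(t))=\omega(\gamma(t),\gamma'(t))$, $\omega(P,\gamma''(t))=\omega(\gamma(t),\gamma''(t))$, and $\omega(P,\gamma'''(t))=\omega(\gamma'(t),\gamma''(t))+\omega(\gamma(t),\gamma'''(t))$.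
   Context: $\mathbb{R}^{2d}$ carries the standard symplectic form $\omega$. A curve $\gamma$ is symplectically convex if $\omega(\gamma'(t),\gamma''(t))>0$ for all $t$. The image of $\Psi$ is the domain of the outer symplectic billiard relation of $\gamma$. Let $\Delta=\{(P,t)\in\mathbb{R}^{2d}\times S^1:\omega(P-\gamma(t),\gamma'(t))=0,\ \omega(P-\gamma(t),\gamma''(t))=0\}$ (a smooth $(2d-1)$-manifold), so that $\Sigma$ is its projection to $\mathbb{R}^{2d}$; a singular point of $\Sigma$ is a point $P$ such that for some $(P,t)\in\Delta$ the differential of the projection $\Delta\to\mathbb{R}^{2d}$ at $(P,t)$ has rank less than $2d-1$. *)

(* Defs.v *)
From mathcomp Require Import all_boot all_algebra.
From mathcomp Require Import all_classical all_reals all_analysis.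
Import GRing.Theory Num.Theory numFieldNormedType.Exports.
Set Implicit Arguments. Unset Strict Implicit. Unset Printing Implicit Defensive.
Local Open Scope ring_scope.

(* R^{2d} is 'rV[R]_(d + d); coordinates (x_1..x_d, y_1..y_d). *)
Definition omega (R : realType) (d : nat) (u v : 'rV[R]_(d + d)) : R :=
  \sum_(i < d) (u ord0 (lshift d i) * v ord0 (rshift d i)
                - u ord0 (rshift d i) * v ord0 (lshift d i)).

(* k-th derivative of the curve (S^1 realised as R with period 1). *)
Definition dgamma (R : realType) (d : nat) (k : nat)
  (gamma : R -> 'rV[R]_(d + d)) : R -> 'rV[R]_(d + d) := derive1n k gamma.

Definition X_eq (R : realType) (d : nat) (gamma : R -> 'rV[R]_(d + d))
  (x : 'rV[R]_(d + d) * R) : R := omega x.1 (dgamma 1 gamma x.2).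

Definition Psi (R : realType) (d : nat) (gamma : R -> 'rV[R]_(d + d))
  (x : 'rV[R]_(d + d) * R) : 'rV[R]_(d + d) := gamma x.2 + x.1.

Definition tangent_X (R : realType) (d : nat) (gamma : R -> 'rV[R]_(d + d))
  (x : 'rV[R]_(d + d) * R) : set ('rV[R]_(d + d) * R) :=
  [set y : 'rV[R]_(d + d) * R | 'd (X_eq gamma) x y = 0].

(* The wall Sigma: singular values of Psi : X -> R^{2d}, i.e. images of points
   x of X at which d Psi restricted to T_x X is not surjective. *)
Definition wall (R : realType) (d : nat) (gamma : R -> 'rV[R]_(d + d)) :
  set 'rV[R]_(d + d) :=
  [set P | exists x : 'rV[R]_(d + d) * R,
     [/\ X_eq gamma x = 0, Psi gamma x = P &
         exists w : 'rV[R]_(d + d),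
           forall y, tangent_X gamma x y -> 'd (Psi gamma) x y <> w]].

Definition Delta_eq (R : realType) (d : nat) (gamma : R -> 'rV[R]_(d + d))
  (x : 'rV[R]_(d + d) * R) : R * R :=
  (omega (x.1 - gamma x.2) (dgamma 1 gamma x.2),
   omega (x.1 - gamma x.2) (dgamma 2 gamma x.2)).

Definition tangent_Delta (R : realType) (d : nat) (gamma : R -> 'rV[R]_(d + d))
  (x : 'rV[R]_(d + d) * R) : set ('rV[R]_(d + d) * R) :=
  [set y : 'rV[R]_(d + d) * R | 'd (Delta_eq gamma) x y = 0].

Definition proj_Delta (R : realType) (d : nat) (x : 'rV[R]_(d + d) * R) :
  'rV[R]_(d + d) := x.1.

Definition rank_dproj_ge (R : realType) (d : nat) (gamma : R -> 'rV[R]_(d + d))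
  (x : 'rV[R]_(d + d) * R) (k : nat) : Prop :=
  exists B : 'M[R]_(k, d + d),
    row_free B /\
    forall i : 'I_k, exists y, tangent_Delta gamma x y /\
                               'd (@proj_Delta R d) x y = row i B.

(* Singular points of Sigma: P with (P,t) in Delta for some t at which the
   differential of the projection has rank < 2d - 1. *)
Definition wall_sing (R : realType) (d : nat) (gamma : R -> 'rV[R]_(d + d)) :
  set 'rV[R]_(d + d) :=
  [set P | exists t : R, Delta_eq gamma (P, t) = (0, 0) /\
                         ~ rank_dproj_ge gamma (P, t) ((d + d).-1)].

(* Main.v *)
From HB Require Import structures.
Require Import Defs.
From mathcomp Require Import all_boot all_algebra.
From mathcomp Require Import all_classical all_reals all_analysis.
From mathcomp Require Import ring lra zify.
Import GRing.Theory Num.Theory numFieldNormedType.Exports.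
Local Open Scope ring_scope.

Section Gen.
Context {R : numFieldType}.

Lemma is_diff_linfun (U W : normedModType R) (f : U -> W) (lf : linear f)
  (cf : continuous f) (x : U) : is_diff x f f.
Proof.
pose M := GRing.isLinear.Build _ _ _ _ f lf.
pose L : {linear U -> W} := HB.pack f M.
apply: DiffDef; first exact: (linear_differentiable (f:=L) x cf).
exact: (diff_lin (f:=L) x cf).
Qed.

Lemma is_diff_fst {U V : normedModType R} (x : U * V) :
  is_diff x (fun p : U * V => p.1) (fun p => p.1).
Proof.
apply: is_diff_linfun; first by move=> a u v.
by move=> p; exact: cvg_fst.
Qed.

Lemma is_diff_snd {U V : normedModType R} (x : U * V) :
  is_diff x (fun p : U * V => p.2) (fun p => p.2).
Proof.
apply: is_diff_linfun; first by move=> a u v.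
by move=> p; exact: cvg_snd.
Qed.

Lemma is_diff_coord n (j : 'I_n) (x : 'rV[R]_n) :
  is_diff x (fun u : 'rV[R]_n => u ord0 j) (fun u => u ord0 j).
Proof.
apply: is_diff_linfun; first by move=> a u v; rewrite !mxE.
exact: coord_continuous.
Qed.

Lemma is_diff_ext {U W : normedModType R} (x : U) (f g df dg : U -> W) :
  is_diff x f df -> f = g -> df = dg -> is_diff x g dg.
Proof. by move=> H <- <-. Qed.

Lemma is_diff_sumf {U : normedModType R} {n} {f df : 'I_n -> U -> R} {x} :
  (forall i, is_diff x (f i) (df i)) ->
  is_diff x (fun z => \sum_(i < n) f i z) (fun y => \sum_(i < n) df i y).
Proof.
elim: n f df => [|n IH] f df H.
  have H0 : is_diff x (cst (0:R)) (0 : U -> R) by exact: is_diff_cst.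
  by eapply is_diff_ext; [exact: H0| |]; apply/funext => z; rewrite big_ord0.
have H1 := IH (fun i => f (widen_ord (leqnSn n) i)) (fun i => df (widen_ord (leqnSn n) i)) (fun i => H _).
have H2 := is_diffD H1 (H ord_max).
by eapply is_diff_ext; [exact: H2| |]; apply/funext => z; rewrite big_ord_recr.
Qed.

Lemma is_diff_mulf {U : normedModType R} {f g df dg : U -> R} {x} :
  is_diff x f df -> is_diff x g dg ->
  is_diff x (fun z => f z * g z) (fun y => f x * dg y + df y * g x).
Proof.
move=> H1 H2; eapply is_diff_ext; [exact: (is_diffM H1 H2)| by [] |].
by apply/funext => y /=; rewrite [df y * _]mulrC.
Qed.

Lemma is_diff_subf {U : normedModType R} {f g df dg : U -> R} {x} :
  is_diff x f df -> is_diff x g dg ->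
  is_diff x (fun z => f z - g z) (fun y => df y - dg y).
Proof.
by move=> H1 H2; eapply is_diff_ext; [exact: (is_diffB H1 H2)| by [] | by []].
Qed.

Lemma is_diff_coordf {U : normedModType R} {n} {F dF : U -> 'rV[R]_n} {x} j :
  is_diff x F dF -> is_diff x (fun z => F z ord0 j) (fun y => dF y ord0 j).
Proof.
move=> H; eapply is_diff_ext; [exact: (is_diff_comp H (@is_diff_coord n j (F x)))| by [] | by []].
Qed.

End Gen.

Section S.
Variable R : realType.

Lemma is_diff_omega {U : normedModType R} {d} {F G dF dG : U -> 'rV[R]_(d + d)} {x} :
  is_diff x F dF -> is_diff x G dG ->
  is_diff x (fun z => omega (F z) (G z))
            (fun y => omega (F x) (dG y) + omega (dF y) (G x)).
Proof.
move=> HF HG.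
have H := is_diff_sumf (R:=R) (fun i => is_diff_subf (R:=R)
   (is_diff_mulf (R:=R) (is_diff_coordf (R:=R) (lshift d i) HF) (is_diff_coordf (R:=R) (rshift d i) HG))
   (is_diff_mulf (R:=R) (is_diff_coordf (R:=R) (rshift d i) HF) (is_diff_coordf (R:=R) (lshift d i) HG))).
eapply (is_diff_ext (R:=R)); [exact: H | reflexivity | ].
apply/funext => y; rewrite /omega -big_split; apply: eq_bigr => i _ /=; ring.
Qed.

Lemma is_diff_dgamma d (gamma : R -> 'rV[R]_(d + d))
  (H : forall (k : nat) (t : R), derivable (dgamma k gamma) t 1) k t :
  is_diff t (dgamma k gamma) (fun h => h *: dgamma k.+1 gamma t).
Proof.
apply: DiffDef; first exact/derivable1_diffP.
by rewrite deriv1E.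
Qed.

Variable d : nat.
Variable gamma : R -> 'rV[R]_(d + d).
Hypothesis gamma_smooth : forall (k : nat) (t : R), derivable (dgamma k gamma) t 1.
Local Notation g k := (dgamma k gamma).

Lemma is_diff_gk k (x : 'rV[R]_(d + d) * R) :
  is_diff x (fun z : 'rV[R]_(d + d) * R => g k z.2) (fun y => y.2 *: g k.+1 x.2).
Proof.
eapply (is_diff_ext (R:=R) (U:=('rV[R]_(d + d) * R)%type) (W:='rV[R]_(d + d))); [exact: (is_diff_comp (R:=R) (is_diff_snd (R:=R) x) (@is_diff_dgamma d gamma gamma_smooth k x.2)) | by [] | by []].
Qed.

Lemma dPsiE x y : 'd (Psi gamma) x y = y.2 *: g 1 x.2 + y.1.
Proof.
have H : is_diff x (Psi gamma) (fun y => y.2 *: g 1 x.2 + y.1).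
  by eapply (is_diff_ext (R:=R)); [exact: (is_diffD (R:=R) (is_diff_gk 0 x) (is_diff_fst (R:=R) x)) | by [] | by []].
by rewrite (@diff_val _ _ _ _ _ _ _ H).
Qed.

Lemma dXE x y : 'd (X_eq gamma) x y = omega x.1 (y.2 *: g 2 x.2) + omega y.1 (g 1 x.2).
Proof.
have H := is_diff_omega (is_diff_fst (R:=R) x) (is_diff_gk 1 x).
by rewrite (@diff_val _ _ _ _ _ _ _ H).
Qed.

Lemma dprojE x y : 'd (@proj_Delta R d) x y = y.1.
Proof.
have H := is_diff_fst (R:=R) x.
by rewrite (@diff_val _ _ _ _ _ _ _ H).
Qed.

Lemma dDeltaE x y : 'd (Delta_eq gamma) x y =
  (omega (x.1 - g 0 x.2) (y.2 *: g 2 x.2) + omega (y.1 - y.2 *: g 1 x.2) (g 1 x.2),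
   omega (x.1 - g 0 x.2) (y.2 *: g 3 x.2) + omega (y.1 - y.2 *: g 1 x.2) (g 2 x.2)).
Proof.
have HF : is_diff x (fun z : 'rV[R]_(d + d) * R => z.1 - g 0 z.2) (fun y => y.1 - y.2 *: g 1 x.2).
  by eapply (is_diff_ext (R:=R)); [exact: (is_diffB (R:=R) (is_diff_fst (R:=R) x) (is_diff_gk 0 x)) | by [] | by []].
have H := is_diff_pair (R:=R) (is_diff_omega HF (is_diff_gk 1 x)) (is_diff_omega HF (is_diff_gk 2 x)).
by rewrite (@diff_val _ _ _ _ _ _ _ H).
Qed.

Section Om.
Implicit Types a b w u : 'rV[R]_(d + d).

Lemma omegaDl a b w : omega (a + b) w = omega a w + omega b w.
Proof. rewrite /omega -big_split; apply: eq_bigr => i _ /=; rewrite !mxE; ring. Qed.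
Lemma omegaDr a b w : omega w (a + b) = omega w a + omega w b.
Proof. rewrite /omega -big_split; apply: eq_bigr => i _ /=; rewrite !mxE; ring. Qed.
Lemma omegaNl a w : omega (- a) w = - omega a w.
Proof. rewrite /omega -sumrN; apply: eq_bigr => i _ /=; rewrite !mxE; ring. Qed.
Lemma omegaNr a w : omega w (- a) = - omega w a.
Proof. rewrite /omega -sumrN; apply: eq_bigr => i _ /=; rewrite !mxE; ring. Qed.
Lemma omegaBl a b w : omega (a - b) w = omega a w - omega b w.
Proof. by rewrite omegaDl omegaNl. Qed.
Lemma omegaBr a b w : omega w (a - b) = omega w a - omega w b.
Proof. by rewrite omegaDr omegaNr. Qed.
Lemma omegaZl (k : R) a w : omega (k *: a) w = k * omega a w.
Proof. rewrite /omega mulr_sumr; apply: eq_bigr => i _ /=; rewrite !mxE; ring. Qed.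
Lemma omegaZr (k : R) a w : omega w (k *: a) = k * omega w a.
Proof. rewrite /omega mulr_sumr; apply: eq_bigr => i _ /=; rewrite !mxE; ring. Qed.
Lemma omega_anti a b : omega a b = - omega b a.
Proof. rewrite /omega -sumrN; apply: eq_bigr => i _ /=; ring. Qed.
Lemma omega_self a : omega a a = 0.
Proof. rewrite /omega big1 // => i _; ring. Qed.
Lemma omega0l w : omega 0 w = 0.
Proof. by rewrite -(scale0r (0 : 'rV[R]_(d + d))) omegaZl mul0r. Qed.

Lemma omega_suml n (f : 'I_n -> 'rV[R]_(d + d)) w :
  omega (\sum_(i < n) f i) w = \sum_(i < n) omega (f i) w.
Proof.
elim: n f => [|n IH] f; first by rewrite !big_ord0 omega0l.
by rewrite !big_ord_recr /= omegaDl IH.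
Qed.

Definition cmat {n} (ws : 'I_n -> 'rV[R]_(d + d)) : 'M[R]_(d + d, n) :=
  \matrix_(j, k) omega (delta_mx 0 j) (ws k).

Lemma cmatE n (ws : 'I_n -> 'rV[R]_(d + d)) a k :
  (a *m cmat ws) 0 k = omega a (ws k).
Proof.
rewrite mxE {2}(row_sum_delta a) omega_suml; apply: eq_bigr => j _.
by rewrite mxE omegaZl.
Qed.

End Om.

Lemma rank_cmat n (ws vs : 'I_n -> 'rV[R]_(d + d)) :
  (forall i k, omega (vs i) (ws k) = (i == k)%:R) -> \rank (cmat ws) = n.
Proof.
move=> H.
pose D : 'M[R]_(n, d + d) := \matrix_i vs i.
have E : D *m cmat ws = 1%:M.
  apply/matrixP => i k.
  have -> : (D *m cmat ws) i k = (row i D *m cmat ws) 0 k.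
    by rewrite -row_mul [RHS]mxE.
  rewrite /D rowK.
  by rewrite cmatE H !mxE.
apply/eqP; rewrite eqn_leq rank_leq_col /=.
by rewrite -{1}(mxrank1 R n) -E mxrankM_maxr.
Qed.

Lemma sub_ker_cmat n (ws : 'I_n -> 'rV[R]_(d + d)) a :
  (forall k, omega a (ws k) = 0) -> (a <= kermx (cmat ws))%MS.
Proof.
move=> H; apply/sub_kermxP; apply/matrixP => i k.
by rewrite (ord1 i) cmatE H mxE.
Qed.

Lemma ker_cmat n (ws : 'I_n -> 'rV[R]_(d + d)) a k :
  (a <= kermx (cmat ws))%MS -> omega a (ws k) = 0.
Proof.
by move/sub_kermxP => H; rewrite -cmatE H mxE.
Qed.

Lemma exists_basis m n (A : 'M[R]_(m, n)) k :
  \rank A = k -> exists B : 'M[R]_(k, n), row_free B /\ (B <= A)%MS.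
Proof.
move=> <-; exists (row_base A); split; first exact: row_base_free.
by rewrite eq_row_base.
Qed.

End S.

Lemma sum_ord0 (R : realType) n : n = 0%N -> forall F : 'I_n -> R, \sum_(i < n) F i = 0.
Proof. by move=> -> F; rewrite big_ord0. Qed.
Arguments cmat {R d n}.
Arguments exists_basis {R m n A k}.
Arguments ker_cmat {R d n ws a} k.
Arguments sub_ker_cmat {R d n ws a}.
Arguments rank_cmat {R d n ws} vs.

Section Alg.
Variable R : realType.
Variable d : nat.

Lemma alg2 (a c1 c2 c3 Q : 'rV[R]_(d + d)) (s : R) :
  omega Q c2 = 0 -> omega a c1 = 0 -> omega c1 c2 = 1 -> 1 - omega Q c3 != 0 ->
  s = omega a c2 / (1 - omega Q c3) ->
  (omega Q (s *: c2) + omega (a - s *: c1) c1,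
   omega Q (s *: c3) + omega (a - s *: c1) c2) = (0, 0).
Proof.
move=> H2 Ha N Hc ->.
rewrite !omegaZr !omegaBl !omegaZl H2 Ha N omega_self.
congr pair; first by rewrite !mulr0 subrr addr0.
by field.
Qed.

Lemma alg3 (a c1 c2 c3 Q : 'rV[R]_(d + d)) (s : R) :
  omega Q c2 = 0 -> omega Q c3 = 1 -> omega c1 c2 = 1 ->
  (omega Q (s *: c2) + omega (a - s *: c1) c1,
   omega Q (s *: c3) + omega (a - s *: c1) c2) = (0, 0) ->
  omega a c1 = 0 /\ omega a c2 = 0.
Proof.
move=> H2 H3 N [].
rewrite !omegaZr !omegaBl !omegaZl H2 H3 N omega_self.
move=> E1 E2; split.
  by move: E1; rewrite !mulr0 subr0 add0r.
by move: E2; rewrite mulr1 addrC subrK.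
Qed.
End Alg.

Section Alg2.
Variable R : realType.
Variable d : nat.

Definition ws2 (c1 c2 : 'rV[R]_(d + d)) : 'I_2 -> 'rV[R]_(d + d) :=
  fun k => if k == ord0 then c1 else c2.

Lemma rank2 (c1 c2 : 'rV[R]_(d + d)) : omega c1 c2 = 1 -> \rank (cmat (ws2 c1 c2)) = 2%N.
Proof.
move=> N.
apply: (rank_cmat (fun i : 'I_2 => if i == ord0 then - c2 else c1)) => i k.
rewrite /ws2.
case: i => [[|[|i]] Hi] //; case: k => [[|[|k]] Hk] //=.
- by rewrite omegaNl -omega_anti N.
- by rewrite omegaNl omega_self oppr0.
- by rewrite omega_self.
Qed.

Lemma ker2 (c1 c2 a : 'rV[R]_(d + d)) : omega a c1 = 0 -> omega a c2 = 0 ->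
  (a <= kermx (cmat (ws2 c1 c2)))%MS.
Proof.
move=> H1 H2; apply: sub_ker_cmat => k; rewrite /ws2.
by case: (k == ord0).
Qed.
End Alg2.
Arguments ws2 {R d}.
Arguments rank2 {R d c1 c2}.
Arguments ker2 {R d c1 c2 a}.

Arguments dgamma : simpl never.

Theorem mainTheorem9 (R : realType) (d : nat) (gamma : R -> 'rV[R]_(d + d))
  (gamma_smooth : forall (k : nat) (t : R), derivable (dgamma k gamma) t 1)
  (gamma_closed : forall t : R, gamma (t + 1) = gamma t)
  (gamma_normalized : forall t : R,
      omega (dgamma 1 gamma t) (dgamma 2 gamma t) = 1) :
  (forall P : 'rV[R]_(d + d),
     wall gamma P <->
     exists t : R,
       omega P (dgamma 1 gamma t) = omega (gamma t) (dgamma 1 gamma t) /\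
       omega P (dgamma 2 gamma t) = omega (gamma t) (dgamma 2 gamma t)) /\
  (forall P : 'rV[R]_(d + d),
     wall_sing gamma P <->
     exists t : R,
       [/\ omega P (dgamma 1 gamma t) = omega (gamma t) (dgamma 1 gamma t),
           omega P (dgamma 2 gamma t) = omega (gamma t) (dgamma 2 gamma t) &
           omega P (dgamma 3 gamma t) =
             omega (dgamma 1 gamma t) (dgamma 2 gamma t)
             + omega (gamma t) (dgamma 3 gamma t)]).
Proof.
have g0 : dgamma 0 gamma = gamma by [].
have om21 t : omega (dgamma 2 gamma t) (dgamma 1 gamma t) = -1.
  by rewrite omega_anti gamma_normalized.
have om11 t : omega (dgamma 1 gamma t) (dgamma 1 gamma t) = 0 by rewrite omega_self.
split=> P; split.
- case=> -[v t] [/= HX HPsi [w Hw]].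
  rewrite /X_eq /= in HX; rewrite /Psi /= in HPsi.
  exists t.
  have Hc : omega v (dgamma 2 gamma t) = 0.
    case: (eqVneq (omega v (dgamma 2 gamma t)) 0) => // Hc; exfalso.
    pose s := - omega w (dgamma 1 gamma t) / omega v (dgamma 2 gamma t).
    apply: (Hw (w - s *: dgamma 1 gamma t, s)).
      rewrite /tangent_X /= dXE //= omegaZr omegaBl omegaZl om11 /s.
      by field.
    by rewrite dPsiE //= addrC subrK.
  by rewrite -HPsi !omegaDl HX Hc !addr0.
- case=> t [H1 H2].
  exists (P - gamma t, t); split => /=.
  + by rewrite /X_eq /= omegaBl H1 subrr.
  + by rewrite /Psi /= addrC subrK.
  exists (dgamma 2 gamma t) => -[a s].
  rewrite /tangent_X /= dXE //= dPsiE //= omegaZr omegaBl H2 subrr mulr0 add0r => Ha Hd.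
  have := om21 t; rewrite -Hd omegaDl omegaZl om11 Ha mulr0 addr0 => /eqP.
  by rewrite eq_sym oppr_eq0 oner_eq0.
- case=> t [HD Hr].
  move: HD; rewrite /Delta_eq /= => -[H1 H2].
  exists t.
  have E1 : omega P (dgamma 1 gamma t) = omega (gamma t) (dgamma 1 gamma t).
    by apply/eqP; rewrite -subr_eq0 -omegaBl H1.
  have E2 : omega P (dgamma 2 gamma t) = omega (gamma t) (dgamma 2 gamma t).
    by apply/eqP; rewrite -subr_eq0 -omegaBl H2.
  split; [exact: E1 | exact: E2 |].
  case: (eqVneq (omega (P - gamma t) (dgamma 3 gamma t)) 1) => Hc.
    move/eqP: Hc; rewrite omegaBl gamma_normalized subr_eq => /eqP.
    exact.
  exfalso; apply: Hr.
  pose ws := fun _ : 'I_1 => dgamma 1 gamma t.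
  have rC : \rank (cmat ws) = 1%N.
    apply: (rank_cmat (fun _ => - dgamma 2 gamma t)) => i k.
    by rewrite (ord1 i) (ord1 k) eqxx omegaNl om21 opprK.
  have rK : \rank (kermx (cmat ws)) = (d + d).-1 by rewrite mxrank_ker rC subn1.
  have [B [HBf HB]] := exists_basis rK.
  exists B; split; first exact: HBf.
  move=> i.
  have Hi : (row i B <= kermx (cmat ws))%MS := submx_trans (row_sub i B) HB.
  have Ha : omega (row i B) (dgamma 1 gamma t) = 0 := ker_cmat ord0 Hi.
  have Hc' : 1 - omega (P - gamma t) (dgamma 3 gamma t) != 0 by rewrite subr_eq0 eq_sym.
  pose s := omega (row i B) (dgamma 2 gamma t) / (1 - omega (P - gamma t) (dgamma 3 gamma t)).
  exists (row i B, s); split; last by rewrite dprojE.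
  change ('d (Delta_eq gamma) (P, t) (row i B, s) = 0).
  rewrite dDeltaE; last exact: gamma_smooth.
  change ((omega (P - dgamma 0 gamma t) (s *: dgamma 2 gamma t)
       + omega (row i B - s *: dgamma 1 gamma t) (dgamma 1 gamma t),
     omega (P - dgamma 0 gamma t) (s *: dgamma 3 gamma t)
       + omega (row i B - s *: dgamma 1 gamma t) (dgamma 2 gamma t)) = (0, 0)).
  rewrite g0.
  apply: (@alg2 R d (row i B) (dgamma 1 gamma t) (dgamma 2 gamma t)
     (dgamma 3 gamma t) (P - gamma t) s H2 Ha (gamma_normalized t) Hc').
  reflexivity.
- case=> t [H1 H2 H3].
  have dpos : (0 < d)%N.
    rewrite lt0n; apply/eqP => d0.
    have := gamma_normalized 0; rewrite /omega (@sum_ord0 R d d0) => /eqP.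
    by rewrite eq_sym oner_eq0.
  exists t; split.
    rewrite /Delta_eq.
    change ((omega (P - gamma t) (dgamma 1 gamma t), omega (P - gamma t) (dgamma 2 gamma t)) = (0, 0)).
    by rewrite !omegaBl H1 H2 !subrr.
  have Hc3 : omega (P - gamma t) (dgamma 3 gamma t) = 1.
    by rewrite omegaBl H3 gamma_normalized addrK.
  have K2 : omega (P - gamma t) (dgamma 2 gamma t) = 0 by rewrite omegaBl H2 subrr.
  move=> [B [HBf HB]].
  have HBk : (B <= kermx (cmat (ws2 (dgamma 1 gamma t) (dgamma 2 gamma t))))%MS.
    apply/row_subP => i; have [[a s] [Hy Hp]] := HB i.
    have Ea : a = row i B by rewrite -Hp dprojE.
    move: Hy; change ('d (Delta_eq gamma) (P, t) (a, s) = 0 -> (row i B <= kermx (cmat (ws2 (dgamma 1 gamma t) (dgamma 2 gamma t))))%MS).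
    rewrite dDeltaE; last exact: gamma_smooth.
    change ((omega (P - dgamma 0 gamma t) (s *: dgamma 2 gamma t)
       + omega (a - s *: dgamma 1 gamma t) (dgamma 1 gamma t),
     omega (P - dgamma 0 gamma t) (s *: dgamma 3 gamma t)
       + omega (a - s *: dgamma 1 gamma t) (dgamma 2 gamma t)) = (0, 0) -> 
       (row i B <= kermx (cmat (ws2 (dgamma 1 gamma t) (dgamma 2 gamma t))))%MS).
    rewrite g0 => Hy.
    have [Ha1 Ha2] := @alg3 R d a (dgamma 1 gamma t) (dgamma 2 gamma t)
      (dgamma 3 gamma t) (P - gamma t) s K2 Hc3 (gamma_normalized t) Hy.
    rewrite -Ea; exact: (ker2 Ha1 Ha2).
  have := mxrankS HBk.
  rewrite mxrank_ker (rank2 (gamma_normalized t)).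
  have rB : \rank B = (d + d).-1 := eqP HBf.
  rewrite rB => Hle.
  lia.
Qed.
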